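(* Let $k\ge 2$. Suppose that $1/\epsilon\le\binom{d/2}{k-1}$ and that the failure probability $\delta<1$ is a constant. Then for $n\ge 1/\epsilon$, the space complexity of any valid For-All-Itemset-Frequency-Indicator sketch satisfies $|\mathcal{S}(n,d,k,\epsilon,\delta)|=\Omega(d/\epsilon)$.
   Context: A database is $\mathcal{D}\in(\{0,1\}^d)^n$ ($n$ rows, $d$ binary columns). An itemset is $T\subseteq[d]$; a $k$-itemset has $|T|=k$. A row contains $T$ if it has a 1 in every column of $T$; $f_T(\mathcal{D})$ is the fraction of rows containing $T$. A For-All-Itemset-Frequency-Indicator sketch is a pair $(\mathcal{S},\mathcal{Q})$ where $\mathcal{S}$ is a randomized algorithm mapping $(\mathcal{D},k,\epsilon,\delta)$ to a bit string (summary) and $\mathcal{Q}$ is a deterministic procedure mapping a summary and a $k$-itemset $T$ to a bit, such that for every database $\mathcal{D}$, with probability at least $1-\delta$ over the randomness of $\mathcal{S}$, simultaneously for all $k$-itemsets $T$: if $f_T>\epsilon$ then $\mathcal{Q}$ outputs 1, and if $f_T<\epsilon/2$ then $\mathcal{Q}$ outputs 0. The space complexity $|\mathcal{S}(n,d,k,\epsilon,\delta)|$ is the maximum length in bits of the summary over all $\mathcal{D}\in(\{0,1\}^d)^n$. *)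

(* Defs.v *)
From HB Require Import structures.
From mathcomp Require Import all_boot all_order all_algebra.
From mathcomp Require Import boolp reals.
Set Implicit Arguments. Unset Strict Implicit. Unset Printing Implicit Defensive.
Import Order.TTheory GRing.Theory Num.Theory.
Local Open Scope ring_scope.

Definition database (n d : nat) := 'M[bool]_(n, d).

Definition row_contains n d (D : database n d) (i : 'I_n) (T : {set 'I_d}) : bool :=
  [forall j in T, D i j].

Definition freq (R : realType) n d (D : database n d) (T : {set 'I_d}) : R :=
  (#|[set i : 'I_n | row_contains D i T]|%:R) / (n%:R).

Definition indicator_correct (R : realType) n d (k : nat) (eps : R)
    (Q : seq bool -> {set 'I_d} -> bool) (D : database n d) (sigma : seq bool) : Prop :=
  forall T : {set 'I_d}, #|T| = k ->
    (eps < freq R D T -> Q sigma T = true) /\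
    (freq R D T < eps / 2 -> Q sigma T = false).

(* A randomized summary algorithm with parameters (n,d,k,eps,delta) fixed is
   modelled by a finite probability space (Omega, p) of random seeds and a map
   S : database -> Omega -> seq bool.  (S,Q) is a valid
   For-All-Itemset-Frequency-Indicator sketch if for every database D, with
   probability at least 1 - delta over the seed, the summary is correct for all
   k-itemsets simultaneously. *)
Definition prob_space (R : realType) (Omega : finType) (p : Omega -> R) : Prop :=
  (forall w, 0 <= p w) /\ \sum_(w : Omega) p w = 1.

Definition valid_sketch (R : realType) n d (k : nat) (eps delta : R)
    (Omega : finType) (p : Omega -> R)
    (S : database n d -> Omega -> seq bool)
    (Q : seq bool -> {set 'I_d} -> bool) : Prop :=
  prob_space p /\
  forall D : database n d,
    1 - delta <= \sum_(w : Omega | `[< @indicator_correct R n d k eps Q D (S D w) >]) p w.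

(* s bounds the space complexity: every summary that can occur (positive
   probability) over every database has length at most s.  The space complexity
   |S(n,d,k,eps,delta)| is the least such s. *)
Definition space_bound n d (R : realType) (Omega : finType) (p : Omega -> R)
    (S : database n d -> Omega -> seq bool) (s : nat) : Prop :=
  forall (D : database n d) (w : Omega), 0 < p w -> (size (S D w) <= s)%N.

(* Main.v *)
Require Import Defs.
From HB Require Import structures.
From mathcomp Require Import all_boot all_order all_algebra zify ring lra.
From mathcomp Require Import boolp reals.
Import Order.TTheory GRing.Theory Num.Theory.
Local Open Scope ring_scope.

Section Construction.
Variables (n d k G q : nat).
Hypothesis hGq : (G * q <= n)%N.
Hypothesis hGL : (G <= 'C(d./2, k.-1))%N.
Hypothesis hk : (2 <= k)%N.

Let B := (d - d./2)%N.
Lemma h2 : (d./2 <= d)%N. Proof. lia. Qed.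
Definition wid (x : 'I_(d./2)) : 'I_d := widen_ord h2 x.
Lemma wid_inj : injective wid. Proof. by move=> x y /(congr1 val) /= /val_inj. Qed.
Definition L := enum [set A : {set 'I_(d./2)} | #|A| == k.-1].
Lemma size_L : size L = 'C(d./2, k.-1).
Proof. by rewrite -cardE card_draws card_ord. Qed.
Definition U (g : nat) : {set 'I_d} := wid @: nth set0 L g.

Lemma card_U g : (g < G)%N -> #|U g| = k.-1.
Proof.
move=> hg; rewrite card_imset; last exact: wid_inj.
have : nth set0 L g \in L by apply: mem_nth; rewrite size_L; lia.
by rewrite mem_enum inE => /eqP.
Qed.

Lemma U_small g (j : 'I_d) : j \in U g -> (j < d./2)%N.
Proof. by case/imsetP=> x _ ->; rewrite /= ltn_ord. Qed.

Lemma U_inj g g' : (g < G)%N -> (g' < G)%N -> U g \subset U g' -> g = g'.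
Proof.
move=> hg hg' sub.
have : U g == U g'.
  rewrite eqEcard sub /=. rewrite (card_U _ hg) (card_U _ hg'). by [].
move/eqP => e; have := imset_inj wid_inj e; move/eqP.
rewrite nth_uniq ?size_L ?enum_uniq //; [by move/eqP | lia | lia].
Qed.

Lemma colP (b : 'I_B) : (d./2 + b < d)%N.
Proof. have := ltn_ord b; rewrite /B; lia. Qed.
Definition col (b : 'I_B) : 'I_d := Ordinal (colP b).

Variable f : {ffun 'I_G * 'I_B -> bool}.

Definition Dt : database n d := \matrix_(i, j)
  [exists g : 'I_G, (i %/ q == g)%N &&
     ((j \in U g) || [exists b : 'I_B, (j == d./2 + b :> nat) && f (g, b)])].

Definition Tset (g : 'I_G) (b : 'I_B) : {set 'I_d} := col b |: U g.

Lemma card_Tset g b : #|Tset g b| = k.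
Proof.
rewrite cardsU1 card_U //.
have -> : (col b \notin U g) = true.
  by apply/negP => /U_small /=; lia.
lia.
Qed.

Lemma row_true (g : 'I_G) (b : 'I_B) (i : 'I_n) :
  f (g, b) -> (i %/ q)%N = g -> row_contains Dt i (Tset g b).
Proof.
move=> hf hi; apply/forall_inP => j; rewrite mxE; case/setU1P=> [->|hj];
  apply/existsP; exists g; rewrite hi eqxx /=.
  apply/orP; right; apply/existsP; exists b; by rewrite eqxx hf.
by rewrite hj.
Qed.

Lemma row_false (g : 'I_G) (b : 'I_B) (i : 'I_n) :
  row_contains Dt i (Tset g b) -> f (g, b).
Proof.
move=> /forall_inP hc.
have := hc (col b) (setU11 _ _); rewrite mxE => /existsP [g' /andP [/eqP hg' hor]].
case/orP: hor => [/U_small /=| /existsP [b' /andP [/eqP hb hf]]]; first lia.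
have eb : b' = b by apply: ord_inj; move: hb => /= hb; lia.
subst b'.
suff eg : g = g' by rewrite eg.
apply: ord_inj; apply: (U_inj _ _ (ltn_ord g) (ltn_ord g')).
apply/subsetP => j hj.
have := hc j (setU1r _ hj); rewrite mxE => /existsP [g'' /andP [/eqP hg'' hor]].
have e2 : g'' = g' by apply: ord_inj; rewrite -hg'' -hg'.
subst g''.
case/orP: hor => // /existsP [b'' /andP [/eqP hb'' _]].
have := U_small _ _ hj; lia.
Qed.

Lemma Ord_proof (g : 'I_G) (x : 'I_q) : (g * q + x < n)%N.
Proof.
have := ltn_ord g; have := ltn_ord x => h1 h2.
have : (g.+1 * q <= G * q)%N by rewrite leq_mul2r h2 orbT.
rewrite mulSn; lia.
Qed.

Lemma card_group (g : 'I_G) :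
  (q <= #|[set i : 'I_n | (i %/ q)%N == g]|)%N.
Proof.
have inj : injective (fun x : 'I_q => (Ordinal (Ord_proof g x) : 'I_n)).
  by move=> x y /(congr1 val) /= h; apply: ord_inj; lia.
rewrite -[X in (X <= _)%N]card_ord -(card_imset _ inj).
apply: subset_leq_card; apply/subsetP => i /imsetP [x _ ->].
rewrite inE /=; apply/eqP.
have hq : (0 < q)%N by case: x => /= x; case: q => //.
by rewrite divnMDl // divn_small // addn0.
Qed.

Lemma freq_true (R : realType) (eps : R) (g : 'I_G) (b : 'I_B) :
  eps * n%:R < q%:R -> (0 < n)%N -> f (g, b) -> eps < freq R Dt (Tset g b).
Proof.
move=> he hn hf; rewrite /freq ltr_pdivlMr ?ltr0n //.
apply: (lt_le_trans he); rewrite ler_nat.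
apply: (leq_trans (card_group g)); apply: subset_leq_card; apply/subsetP => i.
by rewrite !inE => /eqP hi; apply: row_true.
Qed.

Lemma freq_false (R : realType) (g : 'I_G) (b : 'I_B) :
  ~~ f (g, b) -> freq R Dt (Tset g b) = 0.
Proof.
move=> hf; rewrite /freq.
have -> : [set i : 'I_n | row_contains Dt i (Tset g b)] = set0.
  apply/setP => i; rewrite !inE; apply/negbTE/negP => /row_false.
  by rewrite (negbTE hf).
by rewrite cards0 mul0r.
Qed.

Lemma decode (R : realType) (eps : R) Q sigma (g : 'I_G) (b : 'I_B) :
  0 < eps -> eps * n%:R < q%:R -> (0 < n)%N ->
  indicator_correct k eps Q Dt sigma -> Q sigma (Tset g b) = f (g, b).
Proof.
move=> he heq hn /(_ (Tset g b) (card_Tset g b)) [h1 h2].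
case hf : (f (g, b)).
  by apply: h1; apply: freq_true; rewrite ?hf.
apply: h2; rewrite freq_false ?hf //; lra.
Qed.
End Construction.

Section Sketch.
Variables (R : realType) (n d k : nat) (eps delta : R) (Omega : finType)
  (p : Omega -> R) (S : database n d -> Omega -> seq bool)
  (Q : seq bool -> {set 'I_d} -> bool) (s : nat).
Hypothesis hval : valid_sketch k eps delta p S Q.
Hypothesis hsb : space_bound p S s.
Hypothesis hd : delta < 1.

Definition sig (D : database n d) : seq bool :=
  oapp (S D) [::] [pick w | `[< indicator_correct k eps Q D (S D w) >] && (0 < p w)].

Lemma sig_spec D : indicator_correct k eps Q D (sig D) /\ (size (sig D) <= s)%N.
Proof.
rewrite /sig; case: pickP => [w /andP [/asboolP hc hp] | hn] /=.
  by split => //; apply: hsb.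
exfalso; case: hval => [[hp0 _] /(_ D) hsum].
have : \sum_(w | `[< indicator_correct k eps Q D (S D w) >]) p w = 0.
  apply: big1 => w hw; have := hn w; rewrite hw /= => /negbT hn'.
  by apply/eqP; rewrite eq_le hp0 andbT leNgt.
move=> h0; rewrite h0 subr_le0 in hsum; by have := lt_le_trans hd hsum; rewrite ltxx.
Qed.

Definition enc (sg : seq bool) : 'I_s.+1 * {ffun 'I_s -> bool} :=
  (inord (size sg), [ffun i : 'I_s => nth false sg i]).

Lemma enc_inj s1 s2 : (size s1 <= s)%N -> (size s2 <= s)%N -> enc s1 = enc s2 -> s1 = s2.
Proof.
move=> h1 h2 [e1 /ffunP hn].
have hs : size s1 = size s2.
  by have := congr1 (@nat_of_ord s.+1) e1; rewrite !inordK ?ltnS.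
apply: (eq_from_nth (x0 := false) hs) => i hi.
have his : (i < s)%N by apply: leq_trans h1.
by have := hn (Ordinal his); rewrite !ffunE.
Qed.

Lemma count_bound (X : finType) (h : X -> database n d) :
  (forall x y sigma, indicator_correct k eps Q (h x) sigma ->
     indicator_correct k eps Q (h y) sigma -> x = y) ->
  (#|X| <= s.+1 * 2 ^ s)%N.
Proof.
move=> hdis.
have inj : injective (fun x => enc (sig (h x))).
  move=> x y /enc_inj e.
  have [c1 s1] := sig_spec (h x); have [c2 s2] := sig_spec (h y).
  apply: (hdis x y (sig (h x))) => //; by rewrite e.
have := leq_card _ inj.
by rewrite card_prod card_ord card_ffun card_bool card_ord.
Qed.
End Sketch.

Lemma dB d : (d <= 2 * (d - d./2))%N.
Proof.
have := odd_double_half d; rewrite -addnn.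
move: (nat_of_bool (odd d)) (d./2) => o h e; lia.
Qed.

Theorem theorem2 (R : realType) (delta : R) (hdelta0 : 0 <= delta) (hdelta1 : delta < 1) :
  exists (c N0 : R), 0 < c /\
  forall (k d n : nat) (eps : R),
    (2 <= k)%N ->
    0 < eps -> eps < 1 ->
    eps^-1 <= ('C(d./2, k.-1))%:R ->
    eps^-1 <= n%:R ->
    N0 <= d%:R / eps ->
    forall (Omega : finType) (p : Omega -> R)
           (S : database n d -> Omega -> seq bool)
           (Q : seq bool -> {set 'I_d} -> bool) (s : nat),
      valid_sketch k eps delta p S Q ->
      space_bound p S s ->
      c * (d%:R / eps) <= s%:R.
Proof.
exists (1/16), 0; split; first lra.
move=> k d n eps hk he0 he1 hC hn _ Omega p S Q s hval hsb.
have hinv : 0 < eps^-1 by rewrite invr_gt0.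
have en1 : 1 <= eps * n%:R.
  by have := ler_wpM2l (ltW he0) hn; rewrite mulfV // gt_eqF.
have hn0 : (0 < n)%N by rewrite -(ltr0n R); lra.
set q := (Num.truncn (eps * n%:R)).+1.
have hq1 : eps * n%:R < q%:R by apply: truncnS_gt.
have hq2 : q%:R <= eps * n%:R + 1.
  rewrite /q -natr1 lerD2r truncn_le; lra.
have hqn : (q <= n)%N.
  rewrite /q truncn_lt_nat; last lra.
  have : 0 < n%:R :> R by rewrite ltr0n.
  nra.
have hq0 : (0 < q)%N by [].
set G := (n %/ q)%N.
have hGq : (G * q <= n)%N by apply: leq_divM.
have hG1 : (1 <= G)%N by rewrite divn_gt0.
have hGn : (n < G.+1 * q)%N by apply: ltn_ceil.
have hGr : 1 < 4 * eps * G%:R.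
  have h1 : n%:R < (G%:R + 1) * q%:R :> R by rewrite natr1 -natrM ltr_nat.
  have h2 : (G%:R + 1) * q%:R <= (G%:R + 1) * (2 * eps * n%:R) :> R.
    apply: ler_wpM2l; [rewrite addr_ge0 // ler0n | lra].
  have h3 : 1 <= G%:R :> R by rewrite ler1n.
  have hnr : 0 < n%:R :> R by rewrite ltr0n.
  nra.
have hGL : (G <= 'C(d./2, k.-1))%N.
  rewrite -(ler_nat R); apply: le_trans hC.
  have h1 : (G * q)%:R <= n%:R :> R by rewrite ler_nat.
  rewrite natrM in h1.
  have hG0 : 0 <= G%:R :> R by [].
  have h2 : G%:R * (eps * n%:R) <= n%:R :> R.
    apply: le_trans h1; apply: ler_wpM2l => //; exact: ltW.
  have hnr : 0 < n%:R :> R by rewrite ltr0n.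
  have h3 : G%:R * eps <= 1 :> R.
    rewrite -(ler_pM2r hnr) mul1r; lra.
  by rewrite -[eps^-1]mul1r ler_pdivlMr.
set B := (d - d./2)%N.
have hcount := @count_bound R n d k eps delta Omega p S Q s hval hsb hdelta1
  {ffun 'I_G * 'I_B -> bool} (@Dt n d k G q hGq hGL hk).
have hGB : (G * B <= s + s)%N.
  rewrite -(@leq_exp2l 2) // expnD.
  apply: leq_trans (_ : s.+1 * 2 ^ s <= _)%N; last first.
    by rewrite leq_mul2r ltn_expl // orbT.
  have := hcount; rewrite card_ffun card_bool card_prod !card_ord; apply.
  move=> x y sigma hx hy; apply/ffunP => [[g b]].
  rewrite -(@decode n d k G q hGq hGL hk x R eps Q sigma g b he0 hq1 hn0 hx).
  by rewrite (@decode n d k G q hGq hGL hk y R eps Q sigma g b he0 hq1 hn0 hy).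
have hBn : (d <= 2 * B)%N.
  exact: dB.
have hB : d%:R <= 2 * B%:R :> R.
  have : d%:R <= (2 * B)%:R :> R by rewrite ler_nat.
  by rewrite natrM.
have hGBr : G%:R * B%:R <= 2 * s%:R :> R.
  have : (G * B)%:R <= (2 * s)%:R :> R by rewrite ler_nat mul2n -addnn.
  by rewrite !natrM.
have hB0 : 0 <= B%:R :> R by [].
have hG0 : 0 <= G%:R :> R by [].
rewrite mulrA ler_pdivrMr // .
have h1 : 2 * B%:R * 1 <= 2 * B%:R * (4 * eps * G%:R) :> R.
  by apply: ler_wpM2l; [apply: mulr_ge0 | apply: ltW].
have h2 : eps * (G%:R * B%:R) <= eps * (2 * s%:R) :> R.
  by apply: ler_wpM2l => //; apply: ltW.
lra.
Qed.
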